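(* For $n\ge1$ and $0\le m\le n-1$ let $Z_n(m)$ be the number of $(\underline{i},\underline{k})\in\mathfrak{T}_n$ of weight $m$. Then: (1) $Z_n(m)=\sum_{j=n-m-1}^{n-1}Z_j(m-n+j+1)\,Z_{n-j}(n-j-1)$ for all $0\le m\le n-2$; (2) $Z_n(n-1)=C_{n-1}$; (3) $\sum_{m=0}^{n-1}2^{n-m}Z_n(m)=(n+1)C_n$, where $C_n=\frac1{n+1}\binom{2n}{n}$ is the $n$-th Catalan number.
   Context: $\mathfrak{T}_n$ is the set of pairs $(\underline{i},\underline{k})$ of $p$-tuples of non-negative integers $\underline{i}=(i_1,\dots,i_p)$, $\underline{k}=(k_1,\dots,k_p)$, $0\le p\le n-1$, with $1\le i_1<\dots<i_p\le n-1$ and $1\le i_1-k_1<\dots<i_p-k_p\le n-1$ (the empty pair, $p=0$, is included). The weight of $(\underline{i},\underline{k})$ is $|\bigcup_{j=1}^p\{i_j-k_j,i_j-k_j+1,\dots,i_j\}|$. It is known (Jones) that $|\mathfrak{T}_n|=\sum_{m=0}^{n-1}Z_n(m)=C_n$. *)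

(* Defs.v *)
From mathcomp Require Import all_boot.
Set Implicit Arguments. Unset Strict Implicit. Unset Printing Implicit Defensive.

Definition diffs (i k : seq nat) : seq nat := [seq x.1 - x.2 | x <- zip i k].

Definition inT (n : nat) (i k : seq nat) : bool :=
  [&& size i == size k,
      sorted ltn i, all (fun x => 0 < x <= n.-1) i,
      sorted ltn (diffs i k) & all (fun x => 0 < x <= n.-1) (diffs i k)].

Definition weight (i k : seq nat) : nat :=
  size (undup (flatten [seq iota (x.1 - x.2) x.2.+1 | x <- zip i k])).

(* Elements with p entries are
   enumerated as pairs of p-tuples with entries in 'I_n (i_j <= n-1 and
   k_j <= i_j - 1 <= n-2, so no element of T_n is missed), p ranging over 0..n-1. *)
Definition Z (n m : nat) : nat :=
  \sum_(p < n)
    #|[pred t : p.-tuple 'I_n * p.-tuple 'I_n |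
        inT n (map val t.1) (map val t.2) && (weight (map val t.1) (map val t.2) == m)]|.

Definition catalan (n : nat) : nat := 'C(n.*2, n) %/ n.+1.

(* Main.v *)
Require Import Defs.
From mathcomp Require Import all_boot zify.
Set Implicit Arguments. Unset Strict Implicit. Unset Printing Implicit Defensive.

Definition letters : seq (bool * bool) :=
  [:: (false,false); (true,false); (false,true); (true,true)].

Fixpoint words (l : nat) : seq (seq (bool * bool)) :=
  if l is l'.+1 then [seq a :: w | a <- letters, w <- words l'] else [:: [::]].

Fixpoint okw (h : nat) (w : seq (bool * bool)) : bool :=
  match w with
  | [::] => h == 0
  | a :: w' => (a.2 <= h + a.1) && okw (h + a.1 - a.2) w'
  end.

Fixpoint unc (h : nat) (w : seq (bool * bool)) : nat :=
  match w with
  | [::] => 0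
  | a :: w' => ((h == 0) && ~~ a.1) + unc (h + a.1 - a.2) w'
  end.

Definition DD l h u := count (fun w => okw h w && (unc h w == u)) (words l).

Lemma DD0 h u : DD 0 h u = (h == 0) && (u == 0).
Proof. rewrite /DD /=. by case: (h == 0); case: u. Qed.

Lemma count_words l (P : pred (seq (bool*bool))) :
  count P (words l.+1) =
  count (fun w => P ((false,false) :: w)) (words l) +
  count (fun w => P ((true,false) :: w)) (words l) +
  count (fun w => P ((false,true) :: w)) (words l) +
  count (fun w => P ((true,true) :: w)) (words l).
Proof.
rewrite /= !count_cat !count_map /= addn0 !addnA; done.
Qed.

Lemma DDS l h u : DD l.+1 h.+1 u = DD l h.+1 u + DD l h.+2 u + DD l h u + DD l h.+1 u.
Proof.
rewrite /DD count_words /=.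
by congr (_ + _ + _ + _); apply: eq_count => w; rewrite ?addn0 ?subn0 ?addn1 ?subn1 ?add0n ?addnK.
Qed.

Lemma DD0S l u : DD l.+1 0 u = (if u is u'.+1 then DD l 0 u' else 0) + DD l 1 u + DD l 0 u.
Proof.
rewrite /DD count_words /=.
rewrite count_pred0 addn0.
case: u => [|u].
  by rewrite (@eq_count _ _ xpred0) ?count_pred0 //=; move=> w /=; rewrite andbF.
by rewrite add0n; congr (_ + _ + _); apply: eq_count => w /=; rewrite ?add1n ?eqSS.
Qed.

Lemma DD_big l h u : l < u -> DD l h u = 0.
Proof.
elim: l h u => [|l IH] h u.
  by move=> Hu; rewrite DD0; case: u Hu => // u _; rewrite andbF.
case: u => [//|u] /= Hlu.
case: h => [|h].
  by rewrite DD0S !IH ?(ltnW Hlu).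
by rewrite DDS !IH // ltnW.
Qed.

Lemma DD0h h u : DD 0 h.+1 u = 0.
Proof. by rewrite DD0. Qed.

Definition FF y := DD y 0 0.

Lemma conv l h u : DD l.+1 h u.+1 = \sum_(y < l.+1) DD (l - y) h u * FF y.
Proof.
elim: l h u => [|l IH] h u.
  rewrite big_ord_recr big_ord0 /= /FF DD0 muln1 add0n.
  case: h => [|h]; first by rewrite DD0S !DD0 /=; case: u.
  by rewrite DDS subn0 !DD0 /= !andbF.
rewrite [RHS]big_ord_recr /= subnn.
rewrite (eq_bigr (fun y : 'I_l.+1 => DD (l - y).+1 h u * FF y)); last first.
  by move=> y _; congr (DD _ _ _ * _); rewrite /= subSn // -ltnS.
case: h => [|h].
  case: u => [|u].
    rewrite DD0S !IH.
    rewrite (eq_bigr (fun y : 'I_l.+1 => DD (l - y) 1 0 * FF y + DD (l - y) 0 0 * FF y)); last first.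
      by move=> y _; rewrite DD0S !mulnDl.
    by rewrite big_split /= DD0 mul1n /FF; lia.
  rewrite DD0S !IH.
  rewrite (eq_bigr (fun y : 'I_l.+1 => DD (l - y) 0 u * FF y + DD (l - y) 1 u.+1 * FF y + DD (l - y) 0 u.+1 * FF y)); last first.
    by move=> y _; rewrite DD0S !mulnDl.
  by rewrite !big_split /= DD0 mul0n addn0.
rewrite DDS !IH DD0h mul0n addn0.
rewrite (eq_bigr (fun y : 'I_l.+1 => DD (l - y) h.+1 u * FF y + DD (l - y) h.+2 u * FF y + DD (l - y) h u * FF y + DD (l - y) h.+1 u * FF y)); last first.
  by move=> y _; rewrite DDS !mulnDl.
by rewrite !big_split.
Qed.

Lemma binSym l : 'C(l.*2.+1, l) = 'C(l.*2.+1, l.+1).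
Proof.
rewrite -(@bin_sub l.*2.+1 l); last by rewrite -addnn; lia.
congr 'C(_, _); rewrite -addnn; lia.
Qed.

Lemma Eform l h : DD l h 0 + 'C(l.*2, (l + h).+1) = 'C(l.*2, l + h).
Proof.
elim: l h => [|l IH] h.
  by rewrite DD0 !bin0n; case: h.
rewrite doubleS.
case: h => [|h].
  rewrite DD0S add0n.
  have := IH 1; have := IH 0.
  rewrite !addn0 !addn1 (binS l.*2.+1 l) binSym !binS.
  lia.
rewrite DDS.
have := IH h.+2; have := IH h.+1; have := IH h.
rewrite !addnS !addSn !binS.
lia.
Qed.

Lemma catalanF N : 'C(N.*2, N) = N.+1 * FF N.
Proof.
have H1 := Eform N 0. rewrite addn0 -/(FF N) in H1.
have H2 := mul_bin_left N.*2 N.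
have E : N.*2 - N = N by rewrite -addnn addnK.
rewrite E in H2.
move: H1 H2; set a := 'C(N.*2, N); set b := 'C(N.*2, N.+1); set f := FF N.
move=> H1 H2.
nia.
Qed.

Lemma sumtrunc l h : \sum_(u < l.+2) 2^u * DD l h u = \sum_(u < l.+1) 2^u * DD l h u.
Proof. by rewrite big_ord_recr /= DD_big // muln0 addn0. Qed.

Lemma Wform l h : \sum_(u < l.+1) 2^u * DD l h u = 'C(l.*2, l + h) + 'C(l.*2, (l + h).+1).
Proof.
elim: l h => [|l IH] h.
  by rewrite big_ord_recr big_ord0 /= DD0 !bin0n; case: h.
rewrite doubleS.
case: h => [|h].
  rewrite (eq_bigr (fun u : 'I_l.+2 => 2^u * (if val u is u'.+1 then DD l 0 u' else 0) + 2^u * DD l 1 u + 2^u * DD l 0 u)); last first.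
    by move=> u _; rewrite DD0S !mulnDr; case: u => [[|u] Hu].
  rewrite !big_split /= !sumtrunc IH IH big_ord_recl /= muln0 add0n.
  rewrite (eq_bigr (fun u : 'I_l.+1 => 2 * (2 ^ u * DD l 0 u))); last first.
    by move=> u _; rewrite /bump /= add1n expnS mulnA.
  rewrite -big_distrr /= IH.
  rewrite !addn0 !addn1 (binS l.*2.+1 l) binSym !binS.
  lia.
rewrite (eq_bigr (fun u : 'I_l.+2 => 2^u * DD l h.+1 u + 2^u * DD l h.+2 u + 2^u * DD l h u + 2^u * DD l h.+1 u)); last first.
  by move=> u _; rewrite DDS !mulnDr.
rewrite !big_split /= !sumtrunc !IH.
rewrite !addnS !addSn !binS.
lia.
Qed.

Definition word lo len (D I : seq nat) := [seq (x \in D, x \in I) | x <- iota lo len].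

Definition covered (L I : seq nat) (x : nat) : bool :=
  has (fun p => (p.1 <= x) && (x <= p.2)) (zip L I).

Lemma covered_none L I x : all (fun y => x < y) L -> covered L I x = false.
Proof.
rewrite /covered.
elim: L I => [|a L IH] [|i I] //= /andP [Ha HL].
rewrite IH // orbF; apply/negbTE; rewrite negb_and -ltnNge Ha //.
Qed.

Lemma split_lo lo len D : sorted ltn D -> all (fun x => lo <= x < lo + len.+1) D ->
  exists b, exists2 D1, [&& sorted ltn D1, all (fun x => lo.+1 <= x < lo.+1 + len) D1 & all (fun x => lo < x) D1]
    & D = if b then lo :: D1 else D1.
Proof.
case: D => [|d D'] Hs Ha.
  by exists false, [::].
have HD' : all (ltn d) D' := order_path_min ltn_trans Hs.
have HsD' : sorted ltn D' := path_sorted Hs.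
move: Ha => /= /andP [/andP [Hd1 Hd2] Ha].
case: (ltngtP lo d) => Hld; last first.
- exists true, D'; last by rewrite Hld.
  rewrite HsD' /=.
  apply/andP; split.
    apply/allP => x Hx; move/allP: Ha => /(_ x Hx) /= H1; move/allP: HD' => /(_ x Hx) /= H2.
    lia.
  apply/allP => x Hx; move/allP: HD' => /(_ x Hx) /= H2; lia.
- by move: Hd1; rewrite leqNgt Hld.
- exists false, (d :: D') => //.
  rewrite Hs /=; apply/andP; split.
    apply/andP; split; first lia.
    apply/allP => x Hx; move/allP: Ha => /(_ x Hx) /= H1; move/allP: HD' => /(_ x Hx) /= H2; lia.
  apply/andP; split => //.
  apply/allP => x Hx; move/allP: HD' => /(_ x Hx) /= H2; lia.
Qed.

Lemma count_tail lo len (f g : pred nat) : (forall x, lo < x -> f x = g x) ->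
  count f (iota lo.+1 len) = count g (iota lo.+1 len).
Proof. by move=> H; apply: eq_in_count => x; rewrite mem_iota => /andP [Hx _]; apply: H. Qed.

Lemma wordS lo len b c D1 I1 :
  all (fun x => lo < x) D1 -> all (fun x => lo < x) I1 ->
  word lo len.+1 (if b then lo :: D1 else D1) (if c then lo :: I1 else I1) =
  (b, c) :: word lo.+1 len D1 I1.
Proof.
move=> HD HI; rewrite /word /=.
have nD : lo \in D1 = false.
  by apply/negbTE/negP => H; move/allP: HD => /(_ _ H); rewrite ltnn.
have nI : lo \in I1 = false.
  by apply/negbTE/negP => H; move/allP: HI => /(_ _ H); rewrite ltnn.
congr ((_, _) :: _).
- by case: b; rewrite ?inE ?eqxx ?nD.
- by case: c; rewrite ?inE ?eqxx ?nI.
apply/eq_in_map => x; rewrite mem_iota => /andP [Hx _].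
have Hne : (x == lo) = false by apply/negbTE; rewrite neq_ltn Hx orbT.
by case: b; case: c; rewrite ?inE ?Hne.
Qed.

Lemma all_le_S lo P : all (fun p => p <= lo) P -> all (fun p => p <= lo.+1) P.
Proof. by apply: sub_all => p /= H; rewrite ltnW. Qed.

Lemma cov_gt a L i I x : i < x -> covered (a :: L) (i :: I) x = covered L I x.
Proof. by move=> H; rewrite /covered /= (leqNgt x i) H andbF. Qed.

Lemma cov_at a L I x : all2 leq (a :: L) I -> a <= x -> all (leq x) I -> covered (a :: L) I x.
Proof. by case: I => [|i I] //= /andP [Hai _] Hax /andP [Hxi _]; rewrite /covered /= Hax Hxi. Qed.

Lemma cov_self a L I x : a <= x -> covered (a :: L) (x :: I) x.
Proof. by move=> H; rewrite /covered /= H leqnn. Qed.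

Lemma mainW len : forall lo P D I, sorted ltn D -> sorted ltn I ->
  all (fun x => lo <= x < lo + len) D -> all (fun x => lo <= x < lo + len) I ->
  all (fun p => p <= lo) P ->
  okw (size P) (word lo len D I) = all2 leq (P ++ D) I /\
  (all2 leq (P ++ D) I -> unc (size P) (word lo len D I) = count (predC (covered (P ++ D) I)) (iota lo len)).
Proof.
elim: len => [|len IH] lo P D I sD sI aD aI aP.
  have -> : D = [::] by case: D sD aD => //= d D _ /andP [H _]; lia.
  have -> : I = [::] by case: I sI aI => //= d I _ /andP [H _]; lia.
  by rewrite /word /= cats0; split => //; case: P aP.
have [b [D1 /and3P [sD1 aD1 gD1] eD]] := split_lo sD aD.
have [c [I1 /and3P [sI1 aI1 gI1] eI]] := split_lo sI aI.
rewrite eD eI wordS //.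
have IHP := fun P' aP' => IH lo.+1 P' D1 I1 sD1 sI1 aD1 aI1 aP'.
have aPS := all_le_S aP.
have gI1' : all (leq lo) I1 by apply: sub_all gI1 => x /= /ltnW.
case: b eD; case: c eI => eI eD; case: P aP aPS IHP => [|p P'] aP aPS IHP /=.
-
  rewrite addnK leqnn /=.
  have [H1 H2] := IHP [::] isT.
  split => // H; rewrite cov_self // add0n H2 //.
  by apply: count_tail => x Hx /=; rewrite cov_gt.
-
  have aR : all (fun p => p <= lo.+1) (rcons P' lo) by rewrite all_rcons leqnSn; case/andP: aPS.
  have [H1 H2] := IHP _ aR.
  move: H1 H2; rewrite size_rcons cat_rcons addnK => H1 H2.
  have Hp : p <= lo by case/andP: aP.
  rewrite Hp H1; split => // H; rewrite cov_self // add0n H2 //.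
  by apply: count_tail => x Hx /=; rewrite cov_gt.
-
  have [H1 H2] := IHP [:: lo] ltac:(by rewrite /= leqnSn).
  move: H1 H2 => /= H1 H2; rewrite subn0 H1; split => // H.
  by rewrite H2 // (@cov_at lo D1 I1 lo).
-
  have aR : all (fun p => p <= lo.+1) (rcons (p :: P') lo) by rewrite all_rcons leqnSn.
  have [H1 H2] := IHP _ aR.
  move: H1 H2; rewrite size_rcons cat_rcons => H1 H2.
  move: H1 H2 => /= H1 H2; rewrite subn0 addn1 H1; split => // H.
  have Hp : p <= lo by case/andP: aP.
  by rewrite H2 // (@cov_at p (P' ++ lo :: D1) I1 lo).
-
  have F : all2 leq D1 (lo :: I1) = false.
    by case E: D1 gD1 => [|d D1'] //= /andP [Hd _]; rewrite leqNgt Hd.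
  by rewrite F.
-
  have [H1 H2] := IHP P' ltac:(by case/andP: aPS).
  rewrite addn0 subn1 /= H1.
  have Hp : p <= lo by case/andP: aP.
  rewrite Hp; split => // H; rewrite cov_self // add0n H2 //.
  by apply: count_tail => x Hx /=; rewrite cov_gt.
-
  have [H1 H2] := IHP [::] isT.
  simpl in H1, H2; rewrite /= H1; split => // H.
  rewrite covered_none // H2 //.
-
  have [H1 H2] := IHP _ aPS.
  move: H1 H2 => /= H1 H2; rewrite !addn0 subn0 H1; split => // H.
  have Hp : p <= lo by case/andP: aP.
  by rewrite H2 // (@cov_at p (P' ++ D1) I1 lo).
Qed.

Lemma flat_mem i k x : size i = size k -> all (fun y => 0 < y) (diffs i k) ->
  (x \in flatten [seq iota (p.1 - p.2) p.2.+1 | p <- zip i k]) = covered (diffs i k) i x.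
Proof.
elim: i k => [|a i IH] [|b k] // [Hs] /andP [Hab Ha].
have -> : flatten [seq iota (p.1 - p.2) p.2.+1 | p <- zip (a :: i) (b :: k)] =
  iota (a - b) b.+1 ++ flatten [seq iota (p.1 - p.2) p.2.+1 | p <- zip i k] by [].
rewrite mem_cat mem_iota IH //.
rewrite /covered /=; congr (_ || _).
move: Hab => /= Hab.
have -> : a - b + b.+1 = a.+1 by lia.
by rewrite ltnS.
Qed.

Lemma undup_count (T : eqType) (L s : seq T) : uniq s -> {subset L <= s} ->
  size (undup L) = count (mem L) s.
Proof.
move=> us sub; rewrite -size_filter; apply: perm_size; apply: uniq_perm.
- exact: undup_uniq.
- exact: filter_uniq.
move=> x; rewrite mem_undup mem_filter /=.
by case Hx: (x \in L) => //=; rewrite sub.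
Qed.

Lemma covered_bounds L I N x : covered L I x -> all (leq 1) L -> all (fun y => y <= N) I ->
  (1 <= x) && (x <= N).
Proof.
rewrite /covered; elim: L I => [|a L IH] [|i I] //= /orP [/andP [H1 H2]|H] /andP [Ha HL] /andP [Hi HI].
- apply/andP; split; [exact: leq_trans Ha H1 | exact: leq_trans H2 Hi].
- exact: (IH I H HL HI).
Qed.

Lemma weight_count N i k : inT N.+1 i k -> weight i k = count (covered (diffs i k) i) (iota 1 N).
Proof.
case/and5P => /eqP Hs si ai sd ad.
have pos : all (fun y => 0 < y) (diffs i k) by apply: sub_all ad => y /andP [].
rewrite /weight (undup_count (s := iota 1 N)).
- by apply: eq_count => x /=; rewrite flat_mem.
- exact: iota_uniq.
move=> x; rewrite flat_mem // => Hc.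
rewrite mem_iota add1n ltnS.
apply: (covered_bounds Hc).
- by apply: sub_all ad => y /andP [].
- by apply: sub_all ai => y /andP [].
Qed.

Lemma wordsS l : words l.+1 = [seq a :: w | a <- letters, w <- words l].
Proof. by []. Qed.

Lemma words_mem l w : (w \in words l) = (size w == l).
Proof.
elim: l w => [|l IH] [|a w] //; rewrite wordsS.
  by apply/negbTE/allpairsP => -[[b v] [_ _]].
rewrite eqSS -IH; apply/allpairsP/idP => [[[b v] /= [_ Hv [_ ->]]] // | Hw].
by exists (a, w); split => //; case: a => [[] []].
Qed.

Lemma words_uniq l : uniq (words l).
Proof.
elim: l => [|l IH] //; rewrite wordsS.
apply: allpairs_uniq => //.
by move=> [a w] [b v] _ _ /= [-> ->].
Qed.

Lemma all2_diffs i k : size i = size k -> all2 leq (diffs i k) i.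
Proof. by elim: i k => [|a i IH] [|b k] //= [Hs]; rewrite leq_subr IH. Qed.

Lemma range_conv N s : all (fun x => 0 < x <= N) s -> all (fun x => 1 <= x < 1 + N) s.
Proof. by apply: sub_all => x /andP [H1 H2]; rewrite H1 add1n ltnS. Qed.

Lemma size_diffs i k : size i = size k -> size (diffs i k) = size i.
Proof. by move=> H; rewrite size_map size_zip H minnn. Qed.

Lemma count_word_fst N D I : sorted ltn D -> all (fun x => 1 <= x < 1 + N) D ->
  count fst (word 1 N D I) = size D.
Proof.
move=> sD aD; rewrite /word count_map.
rewrite (@eq_count _ _ (mem D)) //.
rewrite -undup_count ?iota_uniq //.
  by rewrite undup_id // (sorted_uniq ltn_trans ltnn sD).
by move=> x Hx; move/allP: aD => /(_ x Hx); rewrite mem_iota.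
Qed.

Lemma seq_props N m i k : inT N.+1 i k -> weight i k = m ->
  [/\ size (word 1 N (diffs i k) i) = N, okw 0 (word 1 N (diffs i k) i),
      unc 0 (word 1 N (diffs i k) i) = N - m & count fst (word 1 N (diffs i k) i) = size i].
Proof.
move=> H Hw; have := H; case/and5P => /eqP Hs si ai sd ad.
have [H1 H2] := mainW (lo := 1) (P := [::]) sd si (range_conv ad) (range_conv ai) isT.
move: H1 H2 => /= H1 H2.
split.
- by rewrite size_map size_iota.
- by rewrite H1 all2_diffs.
- rewrite H2 ?all2_diffs //.
  have := count_predC (covered (diffs i k) i) (iota 1 N).
  rewrite size_iota -weight_count // Hw; lia.
- by rewrite count_word_fst // ?size_diffs // range_conv.
Qed.

Lemma recover_k i k : size i = size k -> all (fun y => 0 < y) (diffs i k) ->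
  k = [seq p.1 - p.2 | p <- zip i (diffs i k)].
Proof.
elim: i k => [|a i IH] [|b k] // [Hs] /andP [Hab Ha].
rewrite [zip _ _]/= map_cons -IH //.
move: Hab => /= Hab; congr (_ :: _); lia.
Qed.

Lemma mem_range N s x : all (fun y => 0 < y <= N) s -> x \in s -> x \in iota 1 N.
Proof. by move=> /allP H /H /andP [H1 H2]; rewrite mem_iota H1 add1n ltnS. Qed.

Lemma word_eq_mem N D I D' I' :
  all (fun y => 0 < y <= N) D -> all (fun y => 0 < y <= N) I ->
  all (fun y => 0 < y <= N) D' -> all (fun y => 0 < y <= N) I' ->
  word 1 N D I = word 1 N D' I' -> D =i D' /\ I =i I'.
Proof.
move=> aD aI aD' aI' /eq_in_map E; split => x.
- case Hx: (x \in iota 1 N); first by have := E x Hx => -[].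
  apply/idP/idP => H; [have := mem_range aD H | have := mem_range aD' H]; by rewrite Hx.
- case Hx: (x \in iota 1 N); first by have := E x Hx => -[].
  apply/idP/idP => H; [have := mem_range aI H | have := mem_range aI' H]; by rewrite Hx.
Qed.

Lemma seq_inj N i k i' k' : inT N.+1 i k -> inT N.+1 i' k' ->
  word 1 N (diffs i k) i = word 1 N (diffs i' k') i' -> i = i' /\ k = k'.
Proof.
case/and5P => /eqP Hs si ai sd ad; case/and5P => /eqP Hs' si' ai' sd' ad' E.
have [ED EI] := word_eq_mem ad ai ad' ai' E.
have Ei : i = i' := irr_sorted_eq ltn_trans ltnn si si' EI.
have Ed : diffs i k = diffs i' k' := irr_sorted_eq ltn_trans ltnn sd sd' ED.
split => //.
have pos : all (fun y => 0 < y) (diffs i k) by apply: sub_all ad => y /andP [].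
have pos' : all (fun y => 0 < y) (diffs i' k') by apply: sub_all ad' => y /andP [].
by rewrite (recover_k Hs pos) (recover_k Hs' pos') Ed Ei.
Qed.

Lemma diffs_recover D I : all2 leq D I -> diffs I [seq p.1 - p.2 | p <- zip I D] = D.
Proof.
elim: D I => [|b D IH] [|a I] //= /andP [Hb HA].
by rewrite /diffs /= subKn // -/(diffs _ _) IH.
Qed.

Lemma k_bound N I D : all (fun x => x <= N) I -> all (fun x => x <= N) [seq p.1 - p.2 | p <- zip I D].
Proof.
elim: I D => [|a I IH] [|b D] //= /andP [Ha HI].
by rewrite IH // andbT (leq_trans (leq_subr _ _) Ha).
Qed.

Lemma seq_surj N m w : size w = N -> okw 0 w -> unc 0 w = N - m -> m <= N ->
  exists i k, [/\ inT N.+1 i k, weight i k = m, word 1 N (diffs i k) i = w,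
     size i = count fst w & all (fun x => x <= N) i /\ all (fun x => x <= N) k].
Proof.
move=> Hw Hok Hu Hm.
set D := [seq x <- iota 1 N | (nth (false,false) w x.-1).1].
set I := [seq x <- iota 1 N | (nth (false,false) w x.-1).2].
have sD : sorted ltn D := sorted_filter ltn_trans _ (iota_ltn_sorted 1 N).
have sI : sorted ltn I := sorted_filter ltn_trans _ (iota_ltn_sorted 1 N).
have aD : all (fun x => 0 < x <= N) D.
  apply/allP => x; rewrite mem_filter mem_iota => /andP [_ /andP [H1 H2]].
  by apply/andP; split; lia.
have aI : all (fun x => 0 < x <= N) I.
  apply/allP => x; rewrite mem_filter mem_iota => /andP [_ /andP [H1 H2]].
  by apply/andP; split; lia.
have Ew : word 1 N D I = w.
  rewrite /word.
  transitivity [seq nth (false,false) w x.-1 | x <- iota 1 N].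
    by apply/eq_in_map => x Hx; rewrite !mem_filter Hx !andbT; case: nth.
  rewrite -[w in RHS](mkseq_nth (false,false)) /mkseq Hw.
  have -> : iota 1 N = map (addn 1) (iota 0 N) by rewrite -iotaDl.
  by rewrite -map_comp; apply: eq_map => x /=.
have [H1 H2] := mainW (lo:=1) (P:=[::]) sD sI (range_conv aD) (range_conv aI) isT.
rewrite /= Ew in H1 H2.
have HA : all2 leq D I by rewrite -H1.
have sz : size D = size I by move: HA; rewrite all2E => /andP [/eqP].
set k := [seq p.1 - p.2 | p <- zip I D].
have Hdk : diffs I k = D by apply: diffs_recover.
have HT : inT N.+1 I k.
  rewrite /inT Hdk sI sD aI aD /= andbT.
  by rewrite size_map size_zip sz minnn.
exists I, k; split => //.
- rewrite (weight_count HT) Hdk.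
  have := count_predC (covered D I) (iota 1 N).
  rewrite size_iota -H2 // Hu; lia.
- by rewrite Hdk.
- by rewrite -Ew count_word_fst // ?range_conv.
split; first by apply: sub_all aI => x /andP [].
by apply: k_bound; apply: sub_all aI => x /andP [].
Qed.

Lemma sum_count (T : Type) (Q : pred T) (f : T -> nat) K s : all (fun x => f x < K) s ->
  \sum_(p < K) count (fun x => Q x && (f x == p)) s = count Q s.
Proof.
elim: s => [|a s IH] /=; first by rewrite big1.
case/andP => Ha Hs; rewrite big_split /= IH //; congr (_ + _).
rewrite (bigD1 (Ordinal Ha)) //= eqxx andbT big1 ?addn0 // => j /negbTE Hj.
case: eqP; rewrite ?andbF // => E.
by move: Hj; rewrite (_ : j = Ordinal Ha) ?eqxx //; apply: val_inj => /=; rewrite E.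
Qed.

Lemma val_inord_map N s : all (fun x => x <= N) s -> map val (map (@inord N) s) = s.
Proof. by elim: s => [|a s IH] //= /andP [Ha Hs]; rewrite inordK ?IH. Qed.

Lemma ord_inord_map N s : all (fun x => x <= N) s -> map (@nat_of_ord N.+1) (map (@inord N) s) = s.
Proof. by elim: s => [|a s IH] //= /andP [Ha Hs]; rewrite inordK ?IH. Qed.

Lemma card_p N m (p : nat) : m <= N ->
  #|[pred t : p.-tuple 'I_N.+1 * p.-tuple 'I_N.+1 |
        inT N.+1 (map val t.1) (map val t.2) && (weight (map val t.1) (map val t.2) == m)]|
  = count (fun w => okw 0 w && (unc 0 w == N - m) && (count fst w == p)) (words N).
Proof.
move=> Hm.
set A := [pred t : p.-tuple 'I_N.+1 * p.-tuple 'I_N.+1 | _].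
rewrite cardE -size_filter.
rewrite -(size_map (fun t : p.-tuple 'I_N.+1 * p.-tuple 'I_N.+1 =>
            word 1 N (diffs (map val t.1) (map val t.2)) (map val t.1))).
apply: perm_size; apply: uniq_perm.
- rewrite map_inj_in_uniq ?enum_uniq // => t t'; rewrite !mem_enum.
  case: t t' => [t1 t2] [t1' t2'] /andP [H1 _] /andP [H1' _] /= E.
  have [E1 E2] := seq_inj H1 H1' E.
  by congr pair; apply/val_inj/(inj_map val_inj).
- by apply: filter_uniq; apply: words_uniq.
move=> w; apply/mapP/idP.
- move=> [[t1 t2]]; rewrite mem_enum => /andP [H1 /eqP H2] ->.
  have [Hs Hok Hu Hc] := seq_props H1 H2.
  by rewrite mem_filter words_mem Hs Hok Hu Hc /= size_map size_tuple !eqxx.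
rewrite mem_filter words_mem => /andP [/andP [/andP [Hok /eqP Hu] /eqP Hc] /eqP Hs].
have [i [k [HT Hwt Ew Hsi [bi bk]]]] := seq_surj Hs Hok Hu Hm.
have szk : size k = size i by case/andP: HT => /eqP.
have si : size (map (@inord N) i) == p by rewrite size_map Hsi Hc.
have sk : size (map (@inord N) k) == p by rewrite size_map szk Hsi Hc.
exists (Tuple si, Tuple sk); rewrite ?mem_enum /=.
  by rewrite inE /= !val_inord_map // HT Hwt eqxx.
by rewrite !ord_inord_map.
Qed.

Lemma Z_DD N m : m <= N -> Z N.+1 m = DD N 0 (N - m).
Proof.
move=> Hm; rewrite /Z.
rewrite (eq_bigr (fun p : 'I_N.+1 => count (fun w => okw 0 w && (unc 0 w == N - m) && (count fst w == p)) (words N))); last first.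
  by move=> p _; rewrite card_p.
rewrite (@sum_count _ (fun w => okw 0 w && (unc 0 w == N - m)) (fun w => count fst w) N.+1 (words N)) //.
apply/allP => w; rewrite words_mem => /eqP <-; rewrite ltnS; exact: count_size.
Qed.

Lemma catalanFF N : catalan N = FF N.
Proof. by rewrite /catalan catalanF mulKn. Qed.

Theorem mainTheorem18 (n : nat) (hn : 1 <= n) :
  (forall m : nat, m.+2 <= n ->
     Z n m = \sum_(n - m - 1 <= j < n) Z j (m + j + 1 - n) * Z (n - j) (n - j - 1))
  /\ Z n (n - 1) = catalan (n - 1)
  /\ \sum_(m < n) 2 ^ (n - m) * Z n m = n.+1 * catalan n.
Proof.
case: n hn => [//|N] _.
split; last split.
- move=> m Hm.
  case: N Hm => [//|l] Hm.
  have Hml : m <= l by lia.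
  rewrite Z_DD ?(leq_trans Hml) //.
  have -> : l.+1 - m = (l - m).+1 by lia.
  rewrite conv.
  rewrite big_rev_mkord.
  have -> : l.+2 - (l.+2 - m - 1) = m.+1 by lia.
  rewrite -(big_mkord (fun _ => true) (fun y => DD (l - y) 0 (l - m) * FF y)) (big_cat_nat _ (n := m.+1)) //=.
  rewrite [X in _ + X]big1_seq ?addn0; last first.
    move=> y; rewrite mem_index_iota => /andP [_ /andP [H1 H2]].
    by rewrite DD_big ?mul0n //; lia.
  rewrite big_mkord; apply: eq_bigr => k _.
  have Hk := ltn_ord k.
  have -> : l.+2 - k.+1 = (l - k).+1 by lia.
  have -> : m + (l - k).+1 + 1 - l.+2 = m - k by lia.
  have -> : l.+2 - (l - k).+1 - 1 = k by lia.
  have -> : l.+2 - (l - k).+1 = k.+1 by lia.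
  rewrite Z_DD; last by lia.
  rewrite Z_DD // subnn.
  by have -> : l - k - (m - k) = l - m by lia.
- by rewrite subn1 /= Z_DD // subnn catalanFF.
rewrite (eq_bigr (fun m : 'I_N.+1 => 2 ^ (N.+1 - m) * DD N 0 (N - m))); last first.
  by move=> m _; rewrite Z_DD // -ltnS.
rewrite (reindex_inj rev_ord_inj) /=.
rewrite (eq_bigr (fun i : 'I_N.+1 => 2 * (2 ^ i * DD N 0 i))); last first.
  move=> i _; have Hi := ltn_ord i.
  have -> : N.+1 - (N - i) = i.+1 by lia.
  have -> : N - (N - i) = i by lia.
  by rewrite expnS mulnA.
rewrite -big_distrr /= Wform addn0 catalanFF -catalanF doubleS.
rewrite (binS N.*2.+1 N) binSym !binS.
lia.
Qed.
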